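(* Suppose $n\ge 1$, $0<q\le 1$ and $\pi\sim\mu_{n,q}$. Then $$n(1-q)\le \mathbb{E}(\mathrm{LIS}(\pi))\le n-\frac{q}{1+q}(n-1).$$
   Context: For $q>0$ and an integer $n\ge1$, the Mallows measure $\mu_{n,q}$ on $S_n$ is $\mu_{n,q}(\pi)=q^{\mathrm{inv}(\pi)}/Z_{n,q}$, where $\mathrm{inv}(\pi)$ is the number of pairs $i<j$ with $\pi(i)>\pi(j)$ and $Z_{n,q}$ is the normalizing constant (for $q=1$ this is the uniform measure). $\mathrm{LIS}(\pi)$ denotes the length of a longest increasing subsequence of $\pi$. *)

(* Defs.v *)
From HB Require Import structures.
From mathcomp Require Import all_boot all_order all_algebra all_fingroup.
Set Implicit Arguments. Unset Strict Implicit. Unset Printing Implicit Defensive.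
Import Order.TTheory GRing.Theory Num.Theory.

Definition inv n (s : 'S_n) : nat :=
  #|[set p : 'I_n * 'I_n | (p.1 < p.2)%N && (s p.2 < s p.1)%N]|.

Definition incr_subseq n (s : 'S_n) (A : {set 'I_n}) : bool :=
  [forall i in A, forall j in A, (i < j)%N ==> (s i < s j)%N].

Definition LIS n (s : 'S_n) : nat :=
  \max_(A : {set 'I_n} | incr_subseq s A) #|A|.

Local Open Scope ring_scope.

Definition mallowsZ (R : realFieldType) n (q : R) : R :=
  \sum_(s : 'S_n) q ^+ inv s.

Definition mallows (R : realFieldType) n (q : R) (s : 'S_n) : R :=
  q ^+ inv s / mallowsZ n q.

Definition expected_LIS (R : realFieldType) n (q : R) : R :=
  \sum_(s : 'S_n) mallows q s * (LIS s)%:R.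

(* Main.v *)
Require Import Defs.
From HB Require Import structures.
From mathcomp Require Import all_boot all_order all_algebra all_fingroup.
From mathcomp Require Import zify ring lra.
Import Order.TTheory GRing.Theory Num.Theory.
Set Implicit Arguments. Unset Strict Implicit. Unset Printing Implicit Defensive.

Lemma inv_sum n (s : 'S_n) :
  Defs.inv s = \sum_(x : 'I_n) \sum_(y : 'I_n) ((x < y)%N && (s y < s x)%N : nat).
Proof.
rewrite /Defs.inv -sum1_card pair_big /= big_mkcond /=.
by apply: eq_bigr => p _; rewrite inE; case: ifP.
Qed.

Lemma sum2 n (F : 'I_n -> nat) (i j : 'I_n) : i != j ->
  \sum_(x : 'I_n) F x = F i + F j + \sum_(x : 'I_n | (x != i) && (x != j)) F x.
Proof.
move=> nij; rewrite (bigD1 i) //= (bigD1 j) /=; last by rewrite eq_sym.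
by rewrite addnA; congr (_ + _); apply: eq_bigl => x; rewrite andbC.
Qed.

Ltac crush := repeat (case: ltnP => ? /=); lia.

Lemma inv_swap n (s : 'S_n) (i j : 'I_n) : (i < j)%N -> (s j < s i)%N ->
  (forall k : 'I_n, (i < k < j)%N -> (s k < s j)%N || (s i < s k)%N) ->
  (Defs.inv (tperm i j * s)%g).+1 = Defs.inv s.
Proof.
move=> lij lsji hk.
have nij : i != j by apply/eqP => e; rewrite e ltnn in lij.
have sinj : forall a b : 'I_n, a != b -> (s a : nat) != s b.
  by move=> a b /negP ab; apply/negP => /eqP /val_inj /perm_inj /eqP.
rewrite !inv_sum (reindex_inj (inv_inj (tpermK i j))).
under eq_bigr => x _ do rewrite (reindex_inj (inv_inj (tpermK i j))).
under eq_bigr => x _ do under eq_bigr => y _ do rewrite !permM !tpermK.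
rewrite [in LHS](sum2 _ nij) [in RHS](sum2 _ nij) tpermL tpermR.
have rest : \sum_(x : 'I_n | (x != i) && (x != j))
    \sum_(y : 'I_n) ((tperm i j x < tperm i j y)%N && (s y < s x)%N : nat) =
  \sum_(x : 'I_n | (x != i) && (x != j)) \sum_(y : 'I_n) ((x < y)%N && (s y < s x)%N : nat).
  apply: eq_bigr => x /andP[xi xj]; rewrite tpermD 1?eq_sym //.
  rewrite [in LHS](sum2 _ nij) [in RHS](sum2 _ nij) tpermL tpermR.
  congr (_ + _); last first.
    apply: eq_bigr => y /andP[yi yj]; rewrite tpermD // eq_sym //.
  have : (x : nat) != i by []. have : (x : nat) != j by [].
  have := sinj _ _ xi; have := sinj _ _ xj.
  have : (i < x < j)%N -> (s x < s j)%N || (s i < s x)%N by exact: hk.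
  have := sinj _ _ nij.
  move: (i : nat) (j : nat) (x : nat) (s i : nat) (s j : nat) (s x : nat) lij lsji => a b c d e f.
  move=> H1 H2 H3 H4 H5 H6 H7 H8; crush.
rewrite rest -addSn; congr (_ + _).
rewrite !(sum2 _ nij) !tpermL !tpermR.
have h1 : (j < i)%N = false by rewrite ltnNge ltnW.
have h2 : (s i < s j)%N = false by rewrite ltnNge ltnW.
rewrite !ltnn lij lsji h1 h2 /=.
set RA := \sum_(y | _) _; set RB := \sum_(y | _) _.
set RC := \sum_(y | _) _; set RD := \sum_(y | _) _.
suff -> : RA + RB = RC + RD by rewrite !add0n; lia.
rewrite /RA /RB /RC /RD -!big_split; apply: eq_bigr => y /andP[yi yj] /=.
rewrite tpermD 1?eq_sym //.
have : (y : nat) != i by []. have : (y : nat) != j by [].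
have := sinj _ _ yi; have := sinj _ _ yj.
have : (i < y < j)%N -> (s y < s j)%N || (s i < s y)%N by exact: hk.
have := sinj _ _ nij.
move: (i : nat) (j : nat) (y : nat) (s i : nat) (s j : nat) (s y : nat) lij lsji => a b c d e f.
move=> H1 H2 H3 H4 H5 H6 H7 H8; crush.
Qed.

Definition Ei n (s : 'S_n) (i : 'I_n) : bool :=
  [forall j : 'I_n, (i < j)%N ==> (s i < s j)%N].

Lemma lis_lower n (s : 'S_n) : #|[set i | Ei s i]| <= LIS s.
Proof.
rewrite /LIS; apply: (leq_bigmax_cond (F := fun A : {set 'I_n} => #|A|)).
apply/forallP => i; apply/implyP; rewrite inE => Hi.
apply/forallP => j; apply/implyP => _; exact: (forallP Hi j).
Qed.

Definition desc n' (s : 'S_n'.+1) (k : 'I_n'.+1) : bool :=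
  (k < n')%N && (s (inord k.+1) < s k)%N.

Section Up.
Variables (n' : nat) (s : 'S_n'.+1) (A : {set 'I_n'.+1}).
Hypothesis incA : incr_subseq s A.

Definition hh (a : 'I_n'.+1) : 'I_n'.+1 :=
  [arg min_(k < ord_max | (a <= k)%N && ~~ desc s k) (k : nat)].

Lemma hh_spec (a : 'I_n'.+1) : [/\ (a <= hh a)%N, ~~ desc s (hh a) &
   forall x : 'I_n'.+1, (a <= x <= hh a)%N -> (s x <= s a)%N].
Proof.
rewrite /hh; case: arg_minnP => [|m /andP[am ndm] minm].
  by rewrite leq_ord /desc ltnn.
split => // x /andP[ax xm].
have mn : (m <= n')%N by rewrite -ltnS.
suff H : forall d, (a + d <= m)%N -> (s (inord (a + d)) <= s a)%N.
  have := H (x - a)%N; rewrite subnKC // => /(_ xm); by rewrite inord_val.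
elim=> [|d IH] hd; first by rewrite addn0 inord_val.
have hd' : (a + d < m)%N by rewrite addnS in hd.
have dd : desc s (inord (a + d)).
  apply/negPn/negP => nd.
  have := minm (inord (a + d)); rewrite inordK; last by lia.
  rewrite nd andbT => /(_ (leq_addr _ _)); lia.
move: dd; rewrite /desc inordK; last by lia.
move=> /andP[_ lt]; rewrite addnS.
apply: leq_trans (IH (ltnW hd')); exact: ltnW.
Qed.

Lemma hh_inj : {in A &, injective hh}.
Proof.
have key : forall a1 a2, a1 \in A -> a2 \in A -> (a1 < a2)%N -> hh a1 = hh a2 -> False.
  move=> a1 a2 A1 A2 lt e.
  have [_ _ H] := hh_spec a1.
  have [a2h _ _] := hh_spec a2.
  have := H a2; rewrite (ltnW lt) e a2h => /(_ isT).
  have := forallP incA a1; rewrite A1 /= => /forallP /(_ a2); rewrite A2 lt /=.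
  lia.
move=> a1 a2 A1 A2 e; case: (ltngtP a1 a2) => [lt|lt|eq].
- by case: (key _ _ A1 A2 lt e).
- by case: (key _ _ A2 A1 lt (esym e)).
- exact: val_inj.
Qed.

Lemma cardA_le : (#|A| <= #|[set k | ~~ desc s k]|)%N.
Proof.
rewrite -(card_in_imset hh_inj); apply: subset_leq_card.
apply/subsetP => y /imsetP[a _ ->]; rewrite inE.
by have [] := hh_spec a.
Qed.
End Up.

Lemma lis_upper n' (s : 'S_n'.+1) : (LIS s + #|[set k | desc s k]| <= n'.+1)%N.
Proof.
have E : #|[set k | ~~ desc s k]| = (n'.+1 - #|[set k | desc s k]|)%N.
  have := cardsC [set k | desc s k]; rewrite card_ord.
  have -> : ~: [set k | desc s k] = [set k | ~~ desc s k].
    by apply/setP => k; rewrite !inE.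
  lia.
suff : (LIS s <= n'.+1 - #|[set k | desc s k]|)%N.
  have : (#|[set k | desc s k]| <= n'.+1)%N by rewrite -[X in (_ <= X)%N]card_ord max_card.
  lia.
rewrite -E /LIS; apply/bigmax_leqP => A incA; exact: cardA_le.
Qed.

Lemma sinjN n (s : 'S_n) (a b : 'I_n) : a != b -> (s a : nat) != s b.
Proof. by move=> /negP ab; apply/negP => /eqP /val_inj /perm_inj /eqP. Qed.

Section Low.
Variables (n : nat) (i : 'I_n).

Definition Jf (s : 'S_n) : 'I_n :=
  odflt i [pick j : 'I_n | (i < j)%N && (s j < s i)%N &&
     [forall l : 'I_n, ((i < l)%N && (s l < s i)%N) ==> (s l <= s j)%N]].

Lemma Jf_spec s : ~~ Ei s i -> [/\ (i < Jf s)%N, (s (Jf s) < s i)%N &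
  forall l : 'I_n, (i < l)%N -> (s l < s i)%N -> (s l <= s (Jf s))%N].
Proof.
rewrite /Jf; case: pickP => [j /andP[/andP[a b] c] | none] nE.
  by split => // l il sl; move/forallP: c => /(_ l); rewrite il sl.
exfalso; move: nE; rewrite negb_forall => /existsP[j0]; rewrite negb_imply.
move=> /andP[ij0]; rewrite -leqNgt leq_eqVlt => /orP[/eqP e|sj0].
  by move/val_inj/perm_inj: e => e; rewrite e ltnn in ij0.
case: (arg_maxnP (fun j => s j : nat) (P := fun j => (i < j)%N && (s j < s i)%N) (i0 := j0)).
  by rewrite ij0 sj0.
move=> m /andP[im sm] mx; have := none m; rewrite im sm /=.
by move/negP; apply; apply/forallP => l; apply/implyP => /andP[il sl]; apply: mx; rewrite il.
Qed.

Definition fmap (s : 'S_n) : 'S_n := (tperm i (Jf s) * s)%g.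

Lemma fmap_inv s : ~~ Ei s i -> (Defs.inv (fmap s)).+1 = Defs.inv s.
Proof.
move=> nE; have [ij sj mx] := Jf_spec nE.
apply: inv_swap => // k /andP[ik kj].
have kj' : k != Jf s by apply/eqP => e; rewrite e ltnn in kj.
have ki : k != i by apply/eqP => e; rewrite e ltnn in ik.
have := sinjN s kj'; have := sinjN s ki.
case: (ltnP (s k) (s i)) => h; last by lia.
have := mx k ik h; lia.
Qed.

Lemma fmap_char s : ~~ Ei s i ->
  [/\ (i < Jf s)%N, (fmap s i < fmap s (Jf s))%N &
   forall l : 'I_n, (i < l)%N -> (fmap s i < fmap s l)%N -> (fmap s (Jf s) <= fmap s l)%N].
Proof.
move=> nE; have [ij sj mx] := Jf_spec nE.
rewrite /fmap !permM tpermL tpermR; split => // l il.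
have li : l != i by apply/eqP => e; rewrite e ltnn in il.
case: (eqVneq l (Jf s)) => [-> | lj]; rewrite permM; first by rewrite tpermR.
rewrite tpermD 1?eq_sym // => h.
have := sinjN s li; case: (ltnP (s l) (s i)) => h2; last by lia.
have := mx l il h2; lia.
Qed.

Lemma fmap_inj : {in [pred s | ~~ Ei s i] &, injective fmap}.
Proof.
move=> s1 s2 h1 h2 e.
have [a1 b1 c1] := fmap_char h1; have [a2 b2 c2] := fmap_char h2.
rewrite e in b1 c1.
have e1 := c1 _ a2 b2; have e2 := c2 _ a1 b1.
have ej : Jf s1 = Jf s2.
  by apply: (perm_inj (s := fmap s2)); apply: val_inj; apply/eqP; rewrite eqn_leq e1 e2.
by move: e; rewrite /fmap ej => /mulgI.
Qed.

Local Open Scope ring_scope.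
Lemma weight_notE (R : realFieldType) (q : R) : 0 <= q ->
  \sum_(s | ~~ Ei s i) q ^+ Defs.inv s <= q * \sum_(s : 'S_n) q ^+ Defs.inv s.
Proof.
move=> q0.
have -> : \sum_(s | ~~ Ei s i) q ^+ Defs.inv s =
          q * \sum_(s in [pred s | ~~ Ei s i]) q ^+ Defs.inv (fmap s).
  rewrite mulr_sumr; apply: eq_bigr => s hs; by rewrite -(fmap_inv hs) exprS.
rewrite -(big_imset (fun y => q ^+ Defs.inv y) fmap_inj) /=.
apply: ler_wpM2l => //.
rewrite [X in _ <= X](bigID (fun y => y \in fmap @: [pred s | ~~ Ei s i])) /=.
rewrite lerDl; apply: sumr_ge0 => y _; exact: exprn_ge0.
Qed.
End Low.

Local Open Scope ring_scope.

Lemma weight_desc n' (k : 'I_n'.+1) (R : realFieldType) (q : R) : (k < n')%N ->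
  \sum_(s | desc s k) q ^+ Defs.inv s = q * \sum_(s | ~~ desc s k) q ^+ Defs.inv s.
Proof.
move=> kn.
set j : 'I_n'.+1 := inord k.+1.
have jv : (j : nat) = k.+1 by rewrite inordK //; lia.
have kj : k != j by apply/negP => /eqP e; have := congr1 (@nat_of_ord _) e; rewrite jv; lia.
set t := tperm k j.
rewrite (reindex_inj (mulgI t)) mulr_sumr /=.
have dd : forall s : 'S_n'.+1, desc (t * s)%g k = ~~ desc s k.
  move=> s; rewrite /desc -/j kn /= !permM /t tpermL tpermR.
  have := sinjN s kj; lia.
apply: eq_big => s; first by rewrite dd.
rewrite dd => nd; rewrite -exprS; congr (_ ^+ _).
rewrite -[in LHS](inv_swap (s := (t * s)%g) (i := k) (j := j)).
- by rewrite /t mulgA tperm2 mul1g.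
- by rewrite jv.
- rewrite !permM /t tpermL tpermR; move: nd; rewrite /desc -/j kn /=.
  have := sinjN s kj; lia.
- move=> x; rewrite jv; lia.
Qed.

Local Open Scope ring_scope.
Lemma card_sum n (R : realFieldType) (q : R) (P : 'S_n -> 'I_n -> bool) :
  \sum_(s : 'S_n) q ^+ Defs.inv s * (#|[set i | P s i]|)%:R =
  \sum_(i : 'I_n) \sum_(s | P s i) q ^+ Defs.inv s.
Proof.
under [RHS]eq_bigr => i _ do rewrite big_mkcond /=.
rewrite [RHS]exchange_big /=; apply: eq_bigr => s _.
rewrite -sum1_card natr_sum mulr_sumr big_mkcond /=; apply: eq_bigr => i _.
by rewrite inE; case: (P s i); rewrite ?mulr1 ?mulr0.
Qed.

Unset Implicit Arguments.
Theorem proposition1p4 (R : realFieldType) (n : nat) (q : R) :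
  (1 <= n)%N -> 0 < q -> q <= 1 ->
  n%:R * (1 - q) <= expected_LIS n q /\
  expected_LIS n q <= n%:R - q / (1 + q) * (n.-1)%:R.
Proof.
move=> n1 q0 q1; case: n n1 => [//|n'] _ /=.
set Z := \sum_(s : 'S_n'.+1) q ^+ Defs.inv s.
set S := \sum_(s : 'S_n'.+1) q ^+ Defs.inv s * (LIS s)%:R.
have qge : 0 <= q by exact: ltW.
have Zpos : 0 < Z.
  rewrite /Z (bigD1 1%g) //=; apply: ltr_wpDr; first by apply: sumr_ge0 => s _; exact: exprn_ge0.
  exact: exprn_gt0.
have EL : expected_LIS n'.+1 q = S / Z.
  rewrite /expected_LIS /mallows /mallowsZ -/Z /S mulr_suml.
  by apply: eq_bigr => s _; rewrite mulrAC.
rewrite EL ler_pdivlMr // ler_pdivrMr //; split.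
- have step1 : \sum_(s : 'S_n'.+1) q ^+ Defs.inv s * (#|[set i | Ei s i]|)%:R <= S.
    apply: ler_sum => s _; apply: ler_wpM2l; first exact: exprn_ge0.
    by rewrite ler_nat; exact: lis_lower.
  rewrite card_sum in step1; apply: le_trans step1.
  have step3 : forall i : 'I_n'.+1, (1 - q) * Z <= \sum_(s | Ei s i) q ^+ Defs.inv s.
    move=> i; have h := weight_notE i qge; rewrite -/Z in h.
    have hZ : Z = \sum_(s | Ei s i) q ^+ Defs.inv s + \sum_(s | ~~ Ei s i) q ^+ Defs.inv s.
      by rewrite /Z (bigID (fun s => Ei s i)).
    rewrite hZ in h *.
    set A := \sum_(s | Ei s i) _ in h *; set B := \sum_(s | ~~ Ei s i) _ in h *.
    have : (1 - q) * (A + B) = A + B - q * (A + B) by ring.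
    move=> ->; lra.
  apply: le_trans (ler_sum _ (fun i _ => step3 i)).
  by rewrite sumr_const card_ord -mulrA mulr_natl.
- have stepU1 : S <= \sum_(s : 'S_n'.+1) q ^+ Defs.inv s *
        ((n'.+1)%:R - (#|[set k | desc s k]|)%:R).
    apply: ler_sum => s _; apply: ler_wpM2l; first exact: exprn_ge0.
    have := lis_upper s => h.
    rewrite -natrB; last by lia.
    rewrite ler_nat; lia.
  have e1 : \sum_(s : 'S_n'.+1) q ^+ Defs.inv s * ((n'.+1)%:R - (#|[set k | desc s k]|)%:R)
      = (n'.+1)%:R * Z - \sum_(s : 'S_n'.+1) q ^+ Defs.inv s * (#|[set k | desc s k]|)%:R.
    rewrite /Z mulr_sumr -sumrB; apply: eq_bigr => s _; ring.
  rewrite e1 card_sum in stepU1.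
  have e3 : \sum_(k : 'I_n'.+1) \sum_(s | desc s k) q ^+ Defs.inv s = n'%:R * (q / (1 + q) * Z).
    rewrite big_ord_recr /=.
    have -> : \sum_(s : 'S_n'.+1 | desc s ord_max) q ^+ Defs.inv s = 0.
      by apply: big1 => s; rewrite /desc /= ltnn.
    rewrite addr0.
    under eq_bigr => k _ do rewrite (weight_desc (k := widen_ord (leqnSn n') k) q (ltn_ord k)).
    have claim : forall k : 'I_n', q * \sum_(s : 'S_n'.+1 | ~~ desc s (widen_ord (leqnSn n') k)) q ^+ Defs.inv s
        = q / (1 + q) * Z.
      move=> k; have h := weight_desc (k := widen_ord (leqnSn n') k) q (ltn_ord k).
      have hZ : Z = \sum_(s | desc s (widen_ord (leqnSn n') k)) q ^+ Defs.inv s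
          + \sum_(s | ~~ desc s (widen_ord (leqnSn n') k)) q ^+ Defs.inv s.
        by rewrite /Z (bigID (fun s => desc s (widen_ord (leqnSn n') k))).
      rewrite hZ h.
      have q1' : 1 + q != 0 by rewrite gt_eqF // ltr_wpDr.
      by field.
    rewrite (eq_bigr _ (fun k _ => claim k)).
    by rewrite sumr_const card_ord mulr_natl.
  rewrite e3 in stepU1; apply: le_trans stepU1 _.
  have -> : ((n'.+1)%:R - q / (1 + q) * n'%:R) * Z = (n'.+1)%:R * Z - n'%:R * (q / (1 + q) * Z) by ring.
  by [].
Qed.
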